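(* Let $\gamma\in(0,1)$. There is a constant $c_3>0$, a polynomial in $\|D_x\|_\infty,\|D_u\|_\infty,\kappa,\gamma^{-1},\bar w$ (independent of $n,m,H,t$), such that with $\epsilon_3(H)=c_3\sqrt n(1-\gamma)^H$ the following holds. For any $K\in\mathcal K$, the disturbance-action parameter $\bm M(K)=(M^{[1]}(K),\dots,M^{[H]}(K))$ defined by $M^{[i]}(K)=(\mathbb K-K)(A-BK)^{i-1}$ belongs to $\mathcal M$, and for all $t$ and all disturbance sequences in $\mathcal W$, $$\max\big(\|D_x[x_t^K-x_t^{\bm M(K)}]\|_\infty,\ \|D_u[u_t^K-u_t^{\bm M(K)}]\|_\infty\big)\le\epsilon_3(H),$$ where $(x_t^K,u_t^K)$ is produced by the controller $u_t=-Kx_t$ and $(x_t^{\bm M(K)},u_t^{\bm M(K)})$ by the disturbance-action policy with constant parameter $\bm M(K)$, under the same disturbances. Hence $\bm M(K)$ is $\epsilon_3(H)$-loosely safe.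
   Context: System $x_{t+1}=Ax_t+Bu_t+w_t$, $A\in\mathbb R^{n\times n}$, $B\in\mathbb R^{n\times m}$, $x_0=0$, $t=0,\dots,T$; $\mathcal W=\{w:\|w\|_\infty\le\bar w\}$, $\bar w>0$. $\mathcal X=\{x:D_xx\le d_x\}$, $\mathcal U=\{u:D_uu\le d_u\}$ with $D_x\in\mathbb R^{k_x\times n}$, $D_u\in\mathbb R^{k_u\times m}$ (entrywise inequalities; $\mathds1$ all-ones vector; matrix $\|\cdot\|_\infty$ = max absolute row sum, $\|\cdot\|_2$ spectral norm). $K$ is $(\kappa,\gamma)$-strongly stable ($\kappa\ge1$) if $A-BK=Q^{-1}LQ$ with $\|L\|_2\le1-\gamma$, $\max(\|Q\|_2,\|Q^{-1}\|_2,\|K\|_2)\le\kappa$. A controller is safe if $x_t\in\mathcal X$, $u_t\in\mathcal U$ for all $0\le t\le T$ and all disturbance sequences in $\mathcal W$, and $\epsilon$-loosely safe if $D_xx_t\le d_x+\epsilon\mathds1$ and $D_uu_t\le d_u+\epsilon\mathds1$ for all such $t$ and disturbances. $\mathcal K$ = set of $K$ such that $u_t=-Kx_t$ is safe and $K$ is $(\kappa,\gamma)$-strongly stable. Fix a $(\kappa,\gamma)$-strongly stable $\mathbb K$. Disturbance-action policy with parameter $\bm M=(M^{[1]},\dots,M^{[H]})$: $u_t=-\mathbb Kx_t+\sum_{i=1}^HM^{[i]}w_{t-i}$ with $w_s=0$ for $s<0$. $\mathcal M=\{\bm M:\|M^{[i]}\|_\infty\le2\sqrt n\kappa^3(1-\gamma)^{i-1},\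 1\le i\le H\}$. *)

(* Defs.v *)
From HB Require Import structures.
From mathcomp Require Import all_boot all_order all_algebra.
From mathcomp Require Import classical_sets reals.
From mathcomp Require mpoly.

Set Implicit Arguments.
Unset Strict Implicit.
Unset Printing Implicit Defensive.

Import Order.TTheory GRing.Theory Num.Theory.
Local Open Scope ring_scope.
Local Open Scope classical_set_scope.

Section ControlDefs.
Variable R : realType.

(* matrix infinity norm = max absolute row sum (for a column vector this is
   the max absolute entry) *)
Definition ninf (p q : nat) (A : 'M[R]_(p, q)) : R :=
  \big[Num.max/0]_(i < p) \sum_(j < q) `|A i j|.

Definition norm2 (q : nat) (x : 'cV[R]_q) : R :=
  Num.sqrt (\sum_(j < q) (x j 0) ^+ 2).

Definition spec_norm (p q : nat) (A : 'M[R]_(p, q)) : R :=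
  sup [set norm2 (A *m x) | x in [set x : 'cV[R]_q | norm2 x <= 1]].

Definition entry_le_eps (k : nat) (a b : 'cV[R]_k) (eps : R) : Prop :=
  forall i : 'I_k, a i 0 <= b i 0 + eps.

Definition strongly_stable (n m : nat) (A : 'M[R]_n) (B : 'M[R]_(n, m))
    (K : 'M[R]_(m, n)) (kappa gamma : R) : Prop :=
  exists (Q L : 'M[R]_n),
    [/\ Q \in unitmx, A - B *m K = invmx Q *m L *m Q,
        spec_norm L <= 1 - gamma &
        [/\ spec_norm Q <= kappa, spec_norm (invmx Q) <= kappa &
            spec_norm K <= kappa]].

Definition admissible (n : nat) (wbar : R) (w : nat -> 'cV[R]_n) : Prop :=
  forall t, ninf (w t) <= wbar.

Fixpoint traj (n m : nat) (A : 'M[R]_n) (B : 'M[R]_(n, m))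
    (pol : nat -> 'cV[R]_n -> 'cV[R]_m) (w : nat -> 'cV[R]_n) (t : nat)
    : 'cV[R]_n :=
  match t with
  | 0 => 0
  | s.+1 => let x := traj A B pol w s in A *m x + B *m pol s x + w s
  end.

Definition lin_pol (n m : nat) (K : 'M[R]_(m, n)) : nat -> 'cV[R]_n -> 'cV[R]_m :=
  fun _ x => - (K *m x).

(* w_{t-i}, with w_s = 0 for s < 0 *)
Definition wpast (n : nat) (w : nat -> 'cV[R]_n) (t i : nat) : 'cV[R]_n :=
  if (i <= t)%N then w (t - i)%N else 0.

(* disturbance-action policy u_t = -KK x_t + sum_{i=1}^H M^[i] w_{t-i};
   M i stands for M^[i] (only 1 <= i <= H is used) *)
Definition dap_pol (n m H : nat) (KK : 'M[R]_(m, n)) (M : nat -> 'M[R]_(m, n))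
    (w : nat -> 'cV[R]_n) : nat -> 'cV[R]_n -> 'cV[R]_m :=
  fun t x => - (KK *m x) + \sum_(1 <= i < H.+1) M i *m wpast w t i.

Definition xK n m A B (K : 'M[R]_(m, n)) w t : 'cV[R]_n := traj A B (lin_pol K) w t.
Definition uK n m A B (K : 'M[R]_(m, n)) w t : 'cV[R]_m := lin_pol K t (xK A B K w t).

Definition xM n m (A : 'M[R]_n) (B : 'M[R]_(n, m)) H KK M w t : 'cV[R]_n :=
  traj A B (dap_pol H KK M w) w t.
Definition uM n m (A : 'M[R]_n) (B : 'M[R]_(n, m)) H KK M w t : 'cV[R]_m :=
  dap_pol H KK M w t (xM A B H KK M w t).

(* u_t = -Kx_t is safe (with eps-slack: eps-loosely safe; eps = 0: safe) *)
Definition lin_loosely_safe n m kx ku (A : 'M[R]_n) (B : 'M[R]_(n, m))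
    (Dx : 'M[R]_(kx, n)) (dx : 'cV[R]_kx) (Du : 'M[R]_(ku, m)) (du : 'cV[R]_ku)
    (wbar : R) (T : nat) (K : 'M[R]_(m, n)) (eps : R) : Prop :=
  forall w, admissible wbar w -> forall t, (t <= T)%N ->
    entry_le_eps (Dx *m xK A B K w t) dx eps /\
    entry_le_eps (Du *m uK A B K w t) du eps.

Definition dap_loosely_safe n m kx ku (A : 'M[R]_n) (B : 'M[R]_(n, m))
    (Dx : 'M[R]_(kx, n)) (dx : 'cV[R]_kx) (Du : 'M[R]_(ku, m)) (du : 'cV[R]_ku)
    (wbar : R) (T H : nat) (KK : 'M[R]_(m, n)) (M : nat -> 'M[R]_(m, n))
    (eps : R) : Prop :=
  forall w, admissible wbar w -> forall t, (t <= T)%N ->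
    entry_le_eps (Dx *m xM A B H KK M w t) dx eps /\
    entry_le_eps (Du *m uM A B H KK M w t) du eps.

Definition in_Kset n m kx ku A B Dx dx Du du wbar T (K : 'M[R]_(m, n))
    (kappa gamma : R) : Prop :=
  @lin_loosely_safe n m kx ku A B Dx dx Du du wbar T K 0 /\
  strongly_stable A B K kappa gamma.

Definition in_Mset (n m H : nat) (M : nat -> 'M[R]_(m, n)) (kappa gamma : R)
    : Prop :=
  forall i, (1 <= i <= H)%N ->
    ninf (M i) <= 2 * Num.sqrt (n%:R) * kappa ^+ 3 * (1 - gamma) ^+ (i - 1).

Definition MofK (n m : nat) (A : 'M[R]_n) (B : 'M[R]_(n, m))
    (KK K : 'M[R]_(m, n)) : nat -> 'M[R]_(m, n) :=
  fun i => (KK - K) *m (A - B *m K) ^+ (i - 1).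

(* evaluation point (||Dx||_inf, ||Du||_inf, kappa, gamma^-1, wbar) *)
Definition params5 (a b c d e : R) : 'I_5 -> R :=
  fun i => nth 0 [:: a; b; c; d; e] i.

End ControlDefs.

(* Main.v *)
Require Import Defs.
From HB Require Import structures.
From mathcomp Require Import all_boot all_order all_algebra.
From mathcomp Require Import classical_sets reals.
From mathcomp Require mpoly.
From mathcomp Require Import ring lra.
Import Order.TTheory GRing.Theory Num.Theory.
Local Open Scope ring_scope.
Set Implicit Arguments.
Unset Strict Implicit.
Unset Printing Implicit Defensive.

Section Aux.
Variable R : realType.

Lemma sumsq_ge0 q (x : 'cV[R]_q) : 0 <= \sum_j x j 0 ^+ 2.
Proof. by apply: sumr_ge0 => j _; exact: sqr_ge0. Qed.

Lemma n2_ge0 q (x : 'cV[R]_q) : 0 <= norm2 x.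
Proof. exact: sqrtr_ge0. Qed.

Lemma n2_sq q (x : 'cV[R]_q) : norm2 x ^+ 2 = \sum_j x j 0 ^+ 2.
Proof. by rewrite /norm2 sqr_sqrtr // sumsq_ge0. Qed.

Lemma entry_le_n2 q (x : 'cV[R]_q) i : `|x i 0| <= norm2 x.
Proof.
rewrite -sqrtr_sqr /norm2; apply: ler_wsqrtr.
by rewrite (bigD1 i) //= lerDl; apply: sumr_ge0 => j _; exact: sqr_ge0.
Qed.

Lemma n2_eq0 q (x : 'cV[R]_q) : norm2 x = 0 -> x = 0.
Proof.
move=> h; apply/matrixP => i j; rewrite ord1 mxE.
by apply/eqP; rewrite -normr_eq0 eq_le normr_ge0 andbT -h entry_le_n2.
Qed.

Lemma n2_0 q : norm2 (0 : 'cV[R]_q) = 0.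
Proof. by rewrite /norm2 big1 ?sqrtr0 // => j _; rewrite mxE expr0n. Qed.

Lemma n2Z q a (x : 'cV[R]_q) : norm2 (a *: x) = `|a| * norm2 x.
Proof.
rewrite /norm2 -sqrtr_sqr -sqrtrM ?sqr_ge0 // mulr_sumr.
by congr Num.sqrt; apply: eq_bigr => j _; rewrite mxE exprMn.
Qed.

Lemma n2N q (x : 'cV[R]_q) : norm2 (- x) = norm2 x.
Proof. by rewrite -scaleN1r n2Z normrN normr1 mul1r. Qed.

Lemma cauchy_schwarz q (x y : 'cV[R]_q) :
  \sum_j x j 0 * y j 0 <= norm2 x * norm2 y.
Proof.
set S := \sum_j x j 0 * y j 0.
have [y0|ny0] := eqVneq (norm2 y) 0.
  rewrite y0 mulr0 /S big1 // => j _; by rewrite (n2_eq0 y0) mxE mulr0.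
have bpos : 0 < norm2 y ^+ 2 by rewrite exprn_gt0 // lt_neqAle eq_sym ny0 n2_ge0.
set a := norm2 x ^+ 2; set b := norm2 y ^+ 2.
have E : \sum_j (b * x j 0 - S * y j 0) ^+ 2 = b * (b * a - S ^+ 2).
  transitivity (\sum_j (b ^+ 2 * x j 0 ^+ 2 - 2 * b * S * (x j 0 * y j 0)
        + S ^+ 2 * y j 0 ^+ 2)).
    by apply: eq_bigr => j _; ring.
  rewrite big_split sumrB /= -!mulr_sumr -/S.
  rewrite /a /b !n2_sq; ring.
have : 0 <= b * (b * a - S ^+ 2).
  by rewrite -E; apply: sumr_ge0 => j _; exact: sqr_ge0.
rewrite pmulr_rge0 // subr_ge0 => h.
have ha : 0 <= norm2 x := n2_ge0 x.
have hb : 0 <= norm2 y := n2_ge0 y.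
rewrite /a /b in h.
have h2 : S ^+ 2 <= (norm2 x * norm2 y) ^+ 2 by rewrite exprMn mulrC.
apply: (le_trans (ler_norm S)).
by rewrite -(ler_pXn2r (_ : 0 < 2)%N) ?nnegrE ?normr_ge0 ?mulr_ge0 // real_normK ?num_real.
Qed.

Lemma n2D q (x y : 'cV[R]_q) : norm2 (x + y) <= norm2 x + norm2 y.
Proof.
have hx := n2_ge0 x; have hy := n2_ge0 y.
rewrite {1}/norm2 -(ger0_norm (addr_ge0 hx hy)) -sqrtr_sqr; apply: ler_wsqrtr.
have cs := cauchy_schwarz x y.
have -> : \sum_j (x + y) j 0 ^+ 2 =
   \sum_j x j 0 ^+ 2 + 2 * \sum_j x j 0 * y j 0 + \sum_j y j 0 ^+ 2.
  rewrite mulr_sumr -!big_split /=; apply: eq_bigr => j _; rewrite !mxE; ring.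
rewrite -!n2_sq; lra.
Qed.

Lemma n2B q (x y : 'cV[R]_q) : norm2 (x - y) <= norm2 x + norm2 y.
Proof. by rewrite -(n2N y); exact: n2D. Qed.

Lemma ninf_ge0 p q (A : 'M[R]_(p, q)) : 0 <= ninf A.
Proof. exact: bigmax_ge_id. Qed.

Lemma row_le_ninf p q (A : 'M[R]_(p, q)) i : \sum_j `|A i j| <= ninf A.
Proof. exact: (le_bigmax _ (fun i => \sum_j `|A i j|)). Qed.

Lemma entry_le_ninf p (v : 'cV[R]_p) i : `|v i 0| <= ninf v.
Proof. by have := row_le_ninf v i; rewrite big_ord1. Qed.

Lemma n2_le_ninf q (x : 'cV[R]_q) : norm2 x <= Num.sqrt q%:R * ninf x.
Proof.
have h0 := ninf_ge0 x.
rewrite -(ger0_norm h0) -sqrtr_sqr -sqrtrM ?ler0n //; apply: ler_wsqrtr.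
apply: (@le_trans _ _ (\sum_(j < q) ninf x ^+ 2)); last first.
  by rewrite sumr_const card_ord mulr_natl.
apply: ler_sum => j _.
have := entry_le_ninf x j; have := normr_ge0 (x j 0).
rewrite -(real_normK (num_real (x j 0))) => ha hb.
by rewrite ler_pXn2r ?nnegrE.
Qed.

Lemma ninf_mul k q (D : 'M[R]_(k, q)) (v : 'cV[R]_q) :
  ninf (D *m v) <= ninf D * norm2 v.
Proof.
apply: bigmax_le; first by rewrite mulr_ge0 ?ninf_ge0 ?n2_ge0.
move=> i _; rewrite big_ord1 mxE.
apply: (le_trans (ler_norm_sum _ _ _)).
apply: (@le_trans _ _ ((\sum_j `|D i j|) * norm2 v)); last first.
  by apply: ler_wpM2r; [exact: n2_ge0 | exact: row_le_ninf].
rewrite mulr_suml; apply: ler_sum => j _; rewrite normrM.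
by apply: ler_wpM2l; [exact: normr_ge0 | exact: entry_le_n2].
Qed.

Lemma spec_bound p q (A : 'M[R]_(p, q)) c (x : 'cV[R]_q) :
  spec_norm A <= c -> norm2 (A *m x) <= c * norm2 x.
Proof.
move=> hc.
move: hc; rewrite /spec_norm; set S := (X in sup X) => hc.
have hS : has_sup S.
  split.
    by exists (norm2 (A *m 0)); exists 0 => //=; rewrite n2_0 ler01.
  exists (Num.sqrt p%:R * ninf A) => _ [y /= hy <-].
  apply: (le_trans (n2_le_ninf _)); apply: ler_wpM2l; first exact: sqrtr_ge0.
  apply: (le_trans (ninf_mul _ _)).
  by rewrite -[X in _ <= X]mulr1; apply: ler_wpM2l; [exact: ninf_ge0|].
have [x0|nx0] := eqVneq (norm2 x) 0.
  by rewrite x0 (n2_eq0 x0) mulmx0 n2_0 mulr0.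
have sp : 0 < norm2 x by rewrite lt_neqAle eq_sym nx0 n2_ge0.
set y := (norm2 x)^-1 *: x.
have ny : norm2 y = 1 by rewrite /y n2Z ger0_norm ?invr_ge0 ?n2_ge0 // mulVf.
have hy : norm2 (A *m y) <= c.
  apply: le_trans hc; apply: sup_upper_bound => //; exists y => //=; by rewrite ny.
have E : norm2 (A *m x) = norm2 x * norm2 (A *m y).
  rewrite -[norm2 x in RHS]ger0_norm ?n2_ge0 // -n2Z; congr norm2.
  by rewrite /y -scalemxAr scalerA divff // scale1r.
by rewrite E mulrC; apply: ler_wpM2r; rewrite ?n2_ge0.
Qed.

Lemma ninf_le_op k q (M : 'M[R]_(k, q)) c :
  0 <= c -> (forall x, norm2 (M *m x) <= c * norm2 x) ->
  ninf M <= Num.sqrt q%:R * c.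
Proof.
move=> c0 hM; apply: bigmax_le; first by rewrite mulr_ge0 ?sqrtr_ge0.
move=> i _ /=.
set s : 'cV[R]_q := \col_j Num.sg (M i j).
have hs : norm2 s <= Num.sqrt q%:R.
  apply: (le_trans (n2_le_ninf _)); rewrite -[X in _ <= X]mulr1.
  apply: ler_wpM2l; first exact: sqrtr_ge0.
  apply: bigmax_le => // j _; rewrite big_ord1 mxE normr_sg.
  by case: (_ != 0).
have -> : \sum_j `|M i j| = (M *m s) i 0.
  by rewrite mxE; apply: eq_bigr => j _; rewrite mxE normrEsg mulrC.
apply: (le_trans (ler_norm _)); apply: (le_trans (entry_le_n2 _ _)).
apply: (le_trans (hM s)); rewrite mulrC; by apply: ler_wpM2r.
Qed.
End Aux.

Section Stab.
Variables (R : realType) (n m : nat) (A : 'M[R]_n) (B : 'M[R]_(n, m)).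
Variables (K : 'M[R]_(m, n)) (kappa gamma : R).
Hypothesis hg : 0 < gamma < 1.
Hypothesis hk : 1 <= kappa.
Hypothesis hs : strongly_stable A B K kappa gamma.
Local Notation F := (A - B *m K).

Let k0 : 0 <= kappa. Proof. exact: le_trans ler01 hk. Qed.
Let g1 : 0 <= 1 - gamma. Proof. case/andP: hg => _ h; lra. Qed.
Let g0 : 0 < gamma. Proof. by case/andP: hg. Qed.

Lemma stab_K x : norm2 (K *m x) <= kappa * norm2 x.
Proof. case: hs => Q [L [_ _ _ [_ _ hK]]]; exact: spec_bound. Qed.

Lemma Lpow (L : 'M[R]_n) : spec_norm L <= 1 - gamma ->
  forall k y, norm2 (L ^+ k *m y) <= (1 - gamma) ^+ k * norm2 y.
Proof.
move=> hL; elim=> [|k IH] y.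
  by rewrite !expr0 mul1r mul1mx.
rewrite exprS -mulmxE -mulmxA exprS -mulrA.
apply: (le_trans (spec_bound _ hL)); apply: ler_wpM2l => //.
Qed.

Lemma stab_pow k x :
  norm2 (F ^+ k *m x) <= kappa ^+ 2 * (1 - gamma) ^+ k * norm2 x.
Proof.
case: hs => Q [L [uQ eF hL [hQ hQi _]]].
have QF : Q * F = L * Q by rewrite eF -!mulmxE !mulmxA mulmxV // mul1mx.
have QFk : Q * F ^+ k = L ^+ k * Q.
  elim: k {x} => [|k IH]; first by rewrite !expr0 mulr1 mul1r.
  by rewrite !exprS mulrA QF -mulrA IH mulrA.
have -> : F ^+ k *m x = invmx Q *m (L ^+ k *m (Q *m x)).
  have QFk' : L ^+ k *m Q = Q *m F ^+ k by rewrite mulmxE QFk.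
  by rewrite (mulmxA (L ^+ k)) QFk' !mulmxA mulVmx // mul1mx.
apply: (le_trans (spec_bound _ hQi)).
apply: (@le_trans _ _ (kappa * ((1 - gamma) ^+ k * norm2 (Q *m x)))).
  by apply: ler_wpM2l => //; exact: Lpow.
rewrite expr2 -!mulrA; apply: ler_wpM2l => //; rewrite mulrCA; apply: ler_wpM2l.
  exact: exprn_ge0.
exact: spec_bound.
Qed.

Lemma stab_rec (e f : nat -> 'cV[R]_n) c :
  e 0%N = 0 -> (forall t, e t.+1 = F *m e t + f t) ->
  (forall t, norm2 (f t) <= c) ->
  forall t, norm2 (e t) <= kappa ^+ 2 * c / gamma.
Proof.
move=> e0 er hf t.
have c0 : 0 <= c := le_trans (n2_ge0 _) (hf 0%N).
case: hs => Q [L [uQ eF hL [hQ hQi _]]].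
have QF : Q *m F = L *m Q by rewrite eF !mulmxA mulmxV // mul1mx.
have P : forall t, norm2 (Q *m e t) <= kappa * c / gamma.
  elim=> [|s IH].
    by rewrite e0 mulmx0 n2_0 divr_ge0 ?mulr_ge0 // ltW.
  rewrite er mulmxDr mulmxA QF -mulmxA.
  apply: (le_trans (n2D _ _)).
  apply: (@le_trans _ _ ((1 - gamma) * (kappa * c / gamma) + kappa * c)).
    apply: lerD.
      apply: (le_trans (spec_bound _ hL)); exact: ler_wpM2l.
    apply: (le_trans (spec_bound _ hQ)); exact: ler_wpM2l.
  rewrite le_eqVlt; apply/orP; left; apply/eqP; field.
  by rewrite gt_eqF.
have -> : e t = invmx Q *m (Q *m e t) by rewrite mulmxA mulVmx // mul1mx.
apply: (le_trans (spec_bound _ hQi)).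
rewrite expr2 -!mulrA; apply: ler_wpM2l => //.
by rewrite mulrA; exact: P.
Qed.

End Stab.

Definition Ssum (R : realType) n (F : 'M[R]_n) (w : nat -> 'cV[R]_n) H t :=
  \sum_(i < H) F ^+ i *m wpast w t i.+1.

Ltac vec_lin := apply/matrixP => ? ?; rewrite !mxE; lra.

Section Traj.
Variables (R : realType) (n m H : nat) (A : 'M[R]_n) (B : 'M[R]_(n, m)).
Variables (KK K : 'M[R]_(m, n)) (w : nat -> 'cV[R]_n).
Local Notation F := (A - B *m K).
Local Notation G := (A - B *m KK).

Lemma y_rec t : xK A B K w t.+1 = F *m xK A B K w t + w t.
Proof. by rewrite /xK /= /lin_pol mulmxBl mulmxN mulmxA. Qed.

Lemma dap_sum t :
  \sum_(1 <= i < H.+1) MofK A B KK K i *m wpast w t i = (KK - K) *m Ssum F w H t.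
Proof.
rewrite big_add1 /= big_mkord /Ssum mulmx_sumr; apply: eq_bigr => i _.
by rewrite /MofK subSS subn0 mulmxA.
Qed.

Lemma S_rec (F0 : 'M[R]_n) H0 t :
  Ssum F0 w H0 t.+1 + F0 ^+ H0 *m wpast w t H0 = w t + F0 *m Ssum F0 w H0 t.
Proof.
case: H0 => [|h].
  by rewrite /Ssum !big_ord0 expr0 mul1mx mulmx0 add0r addr0 /wpast leq0n subn0.
rewrite /Ssum big_ord_recl /= expr0 mul1mx {1}/wpast /= subSS subn0.
rewrite mulmx_sumr big_ord_recr /= -addrA; congr (_ + _).
rewrite mulmxA mulmxE -exprS; congr (_ + _).
apply: eq_bigr => i _; rewrite mulmxA mulmxE -exprS /bump /= add1n.
by rewrite /wpast ltnS subSS.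
Qed.

Lemma S0 (F0 : 'M[R]_n) H0 : Ssum F0 w H0 0 = 0.
Proof. by rewrite /Ssum big1 // => i _; rewrite /wpast /= mulmx0. Qed.

Lemma r_rec t :
  xK A B K w t.+1 - Ssum F w H t.+1 =
  F *m (xK A B K w t - Ssum F w H t) + F ^+ H *m wpast w t H.
Proof.
have E := S_rec F H t.
rewrite y_rec mulmxBr -[Ssum F w H t.+1](addrK (F ^+ H *m wpast w t H)) E.
vec_lin.
Qed.

Lemma e_rec t :
  xK A B K w t.+1 - xM A B H KK (MofK A B KK K) w t.+1 =
  G *m (xK A B K w t - xM A B H KK (MofK A B KK K) w t) +
  (F *m (xK A B K w t - Ssum F w H t) - G *m (xK A B K w t - Ssum F w H t)).
Proof.
rewrite y_rec {1}/xM /= /dap_pol -/(xM A B H KK (MofK A B KK K) w t) dap_sum.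
rewrite ?(mulmxBl, mulmxBr, mulmxDr, mulmxDl, mulmxN, mulNmx) ?mulmxA.
vec_lin.
Qed.

Lemma u_diff t :
  uK A B K w t - uM A B H KK (MofK A B KK K) w t =
  - (KK *m (xK A B K w t - xM A B H KK (MofK A B KK K) w t)) +
  (KK *m (xK A B K w t - Ssum F w H t) - K *m (xK A B K w t - Ssum F w H t)).
Proof.
rewrite /uK /uM /lin_pol /dap_pol dap_sum.
rewrite ?(mulmxBl, mulmxBr, mulmxDr, mulmxDl, mulmxN, mulNmx) ?mulmxA.
vec_lin.
Qed.

End Traj.

Lemma wp_bound (R : realType) n (w : nat -> 'cV[R]_n) wbar t i :
  0 < wbar -> admissible wbar w -> norm2 (wpast w t i) <= Num.sqrt n%:R * wbar.
Proof.
move=> w0 hw; rewrite /wpast; case: ifP => _.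
  apply: (le_trans (n2_le_ninf _)); apply: ler_wpM2l; [exact: sqrtr_ge0| exact: hw].
by rewrite n2_0 mulr_ge0 ?sqrtr_ge0 // ltW.
Qed.

Lemma entry_sub (R : realType) k (P Q : 'cV[R]_k) i : (P - Q) i 0 = P i 0 - Q i 0.
Proof. by rewrite !mxE. Qed.

Module PcM.
Import mpoly.
Definition Xv (R : realType) (i : 'I_5) : mpoly.mpoly 5 R :=
  mpoly.mpolyX R (mpoly.mnm1 i).

Definition Pc (R : realType) : mpoly.mpoly 5 R :=
  1 + ((Xv R (@Ordinal 5 0 isT) + Xv R (@Ordinal 5 1 isT)) * Xv R (@Ordinal 5 2 isT) ^+ 9
       * Xv R (@Ordinal 5 3 isT) ^+ 2 * Xv R (@Ordinal 5 4 isT)) *+ 4.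

Lemma Pc_eval (R : realType) (a b c d e : R) :
  mpoly.meval (params5 a b c d e) (Pc R) = 1 + ((a + b) * c ^+ 9 * d ^+ 2 * e) *+ 4.
Proof.
rewrite /Pc rmorphD rmorph1 rmorphMn !rmorphM ?rmorphXn ?rmorphD /= /Xv !mpoly.mevalXU /params5 /=; ring.
Qed.

End PcM.
Import PcM.

Lemma final_scalar (R : realType) (a b k d W X re rr : R) :
  0 <= a -> 0 <= b -> 1 <= k -> 1 <= d -> 0 <= W -> 0 <= X ->
  re <= 2 * k ^+ 8 * d ^+ 2 * W * X -> rr <= k ^+ 4 * d * W * X ->
  0 <= re -> 0 <= rr ->
  a * re <= (1 + ((a + b) * k ^+ 9 * d ^+ 2 * W) *+ 4) * X /\
  b * (k * re + 2 * k * rr) <= (1 + ((a + b) * k ^+ 9 * d ^+ 2 * W) *+ 4) * X.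
Proof.
move=> a0 b0 k1 d1 W0 X0 hre hrr re0 rr0.
have k0 : 0 <= k by lra.
set V := d ^+ 2 * W * X.
have V0 : 0 <= V.
  apply: mulr_ge0 => //; apply: mulr_ge0 => //; apply: exprn_ge0; lra.
set Z := k ^+ 9 * V.
have Z0 : 0 <= Z by apply: mulr_ge0 => //; apply: exprn_ge0.
have k89 : k ^+ 8 <= k ^+ 9 by rewrite [k ^+ 9]exprS; apply: ler_peMl; [exact: exprn_ge0 | done].
have k59 : k ^+ 5 <= k ^+ 9.
  have -> : k ^+ 9 = k ^+ 4 * k ^+ 5 by rewrite -exprD.
  by apply: ler_peMl; [exact: exprn_ge0 | exact: exprn_ege1].
have dd : d <= d ^+ 2 by rewrite expr2; apply: ler_peMl => //; lra.
have h1 : re <= 2 * Z.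
  apply: (le_trans hre); rewrite /Z.
  have -> : 2 * k ^+ 8 * d ^+ 2 * W * X = 2 * (k ^+ 8 * V) by rewrite /V; ring.
  by rewrite ler_pM2l //; apply: ler_wpM2r.
have h2 : k * re <= 2 * Z.
  apply: (@le_trans _ _ (k * (2 * k ^+ 8 * d ^+ 2 * W * X))); first exact: ler_wpM2l.
  by rewrite /Z /V le_eqVlt; apply/orP; left; apply/eqP; ring.
have h3 : k * rr <= Z.
  apply: (@le_trans _ _ (k * (k ^+ 4 * d * W * X))); first exact: ler_wpM2l.
  have -> : k * (k ^+ 4 * d * W * X) = (k ^+ 5 * d) * (W * X) by ring.
  rewrite /Z /V (_ : k ^+ 9 * (d ^+ 2 * W * X) = (k ^+ 9 * d ^+ 2) * (W * X)); last by ring.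
  apply: ler_wpM2r; first by rewrite mulr_ge0.
  apply: ler_pM => //; (try apply: exprn_ge0); lra.
have -> : (1 + ((a + b) * k ^+ 9 * d ^+ 2 * W) *+ 4) * X = X + 4 * (a * Z) + 4 * (b * Z).
  by rewrite /Z /V; ring.
have aZ : 0 <= a * Z by rewrite mulr_ge0.
have bZ : 0 <= b * Z by rewrite mulr_ge0.
split; nra.
Qed.

Theorem lemma4 (R : realType) :
  exists P : mpoly.mpoly 5 R,
  forall (n m kx ku T H : nat) (A : 'M[R]_n) (B : 'M[R]_(n, m))
    (Dx : 'M[R]_(kx, n)) (dx : 'cV[R]_kx) (Du : 'M[R]_(ku, m)) (du : 'cV[R]_ku)
    (wbar kappa gamma : R) (KK K : 'M[R]_(m, n)),
  0 < gamma < 1 -> 1 <= kappa -> 0 < wbar ->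
  strongly_stable A B KK kappa gamma ->
  in_Kset A B Dx dx Du du wbar T K kappa gamma ->
  let c3 := mpoly.meval (params5 (ninf Dx) (ninf Du) kappa gamma^-1 wbar) P in
  let eps3 := c3 * Num.sqrt (n%:R) * (1 - gamma) ^+ H in
  [/\ 0 < c3,
      in_Mset H (MofK A B KK K) kappa gamma,
      (forall w, admissible wbar w -> forall t, (t <= T)%N ->
         Num.max (ninf (Dx *m (xK A B K w t - xM A B H KK (MofK A B KK K) w t)))
                 (ninf (Du *m (uK A B K w t - uM A B H KK (MofK A B KK K) w t)))
         <= eps3) &
      dap_loosely_safe A B Dx dx Du du wbar T H KK (MofK A B KK K) eps3].
Proof.
exists (Pc R).
move=> n m kx ku T H A B Dx dx Du du wbar kappa gamma KK K hg hk hw hKK [hsafe hK].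
move=> c3 eps3.
have c3E : c3 = 1 + ((ninf Dx + ninf Du) * kappa ^+ 9 * gamma^-1 ^+ 2 * wbar) *+ 4.
  by rewrite /c3 Pc_eval.
have g0 : 0 < gamma by case/andP: hg.
have g1 : gamma < 1 by case/andP: hg.
have k0 : 0 <= kappa by lra.
have d1 : 1 <= gamma^-1 by rewrite invf_ge1 // ltW.
have a0 := ninf_ge0 Dx; have b0 := ninf_ge0 Du.
have c3pos : 0 < c3.
  rewrite c3E; apply: (lt_le_trans ltr01); rewrite lerDl; apply: mulrn_wge0.
  apply: mulr_ge0; last exact: ltW.
  apply: mulr_ge0; last by apply: exprn_ge0; lra.
  by apply: mulr_ge0; [apply: addr_ge0 | apply: exprn_ge0].
have Mset : in_Mset H (MofK A B KK K) kappa gamma.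
  move=> i _.
  have -> : 2 * Num.sqrt n%:R * kappa ^+ 3 * (1 - gamma) ^+ (i - 1) =
      Num.sqrt n%:R * (2 * kappa ^+ 3 * (1 - gamma) ^+ (i - 1)) by ring.
  have q0 : 0 <= (1 - gamma) ^+ (i - 1) by apply: exprn_ge0; lra.
  apply: ninf_le_op.
    by apply: mulr_ge0 => //; apply: mulr_ge0 => //; apply: exprn_ge0.
  move=> x; rewrite /MofK -mulmxA mulmxBl.
  apply: (le_trans (n2B _ _)).
  have h1 := stab_K hKK ((A - B *m K) ^+ (i - 1) *m x).
  have h2 := stab_K hK ((A - B *m K) ^+ (i - 1) *m x).
  have h3 := stab_pow hg hk hK (i - 1) x.
  move: h1 h2 h3 (n2_ge0 x) (n2_ge0 ((A - B *m K) ^+ (i - 1) *m x)) q0.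
  set N1 := norm2 (_ *m x); set N0 := norm2 x; set q := (1 - gamma) ^+ (i - 1).
  move=> h1 h2 h3 hN0 hN1 q0.
  have : kappa * N1 <= kappa * (kappa ^+ 2 * q * N0) by apply: ler_wpM2l.
  move=> h4.
  have -> : 2 * kappa ^+ 3 * q * N0 = 2 * (kappa * (kappa ^+ 2 * q * N0)) by ring.
  lra.
have main : forall w, admissible wbar w -> forall t,
   ninf (Dx *m (xK A B K w t - xM A B H KK (MofK A B KK K) w t)) <= eps3 /\
   ninf (Du *m (uK A B K w t - uM A B H KK (MofK A B KK K) w t)) <= eps3.
  move=> w hwa t.
  set rho := kappa ^+ 2 * (kappa ^+ 2 * (1 - gamma) ^+ H * (Num.sqrt n%:R * wbar))
             / gamma.
  have hr : forall t, norm2 (xK A B K w t - Ssum (A - B *m K) w H t) <= rho.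
    apply: (stab_rec hg hk hK
      (f := fun t => (A - B *m K) ^+ H *m wpast w t H)).
    - by rewrite /xK /= S0 subr0.
    - by move=> s; exact: r_rec.
    - move=> s; apply: (le_trans (stab_pow hg hk hK _ _)); apply: ler_wpM2l.
        by apply: mulr_ge0; [apply: exprn_ge0 | apply: exprn_ge0; lra].
      exact: wp_bound.
  set re := kappa ^+ 2 * (2 * kappa ^+ 2 * rho) / gamma.
  have he : forall t,
      norm2 (xK A B K w t - xM A B H KK (MofK A B KK K) w t) <= re.
    apply: (stab_rec hg hk hKK (f := fun t =>
      (A - B *m K) *m (xK A B K w t - Ssum (A - B *m K) w H t) -
      (A - B *m KK) *m (xK A B K w t - Ssum (A - B *m K) w H t))).
    - by rewrite /xK /xM /= subr0.
    - by move=> s; exact: e_rec.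
    - move=> s /=; apply: (le_trans (n2B _ _)).
      have h1 := stab_pow hg hk hK 1 (xK A B K w s - Ssum (A - B *m K) w H s).
      have h2 := stab_pow hg hk hKK 1 (xK A B K w s - Ssum (A - B *m K) w H s).
      rewrite !expr1 in h1 h2.
      move: h1 h2 (hr s) (n2_ge0 (xK A B K w s - Ssum (A - B *m K) w H s)).
      set N := norm2 (xK A B K w s - _); move=> h1 h2 h3 hN.
      have h4 : (1 - gamma) * N <= rho by nra.
      have h5 : kappa ^+ 2 * (1 - gamma) * N <= kappa ^+ 2 * rho.
        by rewrite -mulrA; apply: ler_wpM2l => //; apply: exprn_ge0.
      lra.
  set X := Num.sqrt n%:R * (1 - gamma) ^+ H.
  have X0 : 0 <= X by apply: mulr_ge0; [exact: sqrtr_ge0 | apply: exprn_ge0; lra].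
  have eps3E : eps3 = c3 * X by rewrite /eps3 /X mulrA.
  have rr0 : 0 <= rho.
    apply: le_trans (hr 0%N); exact: n2_ge0.
  have re0 : 0 <= re.
    apply: le_trans (he 0%N); exact: n2_ge0.
  have hre : re <= 2 * kappa ^+ 8 * gamma^-1 ^+ 2 * wbar * X.
    rewrite le_eqVlt; apply/orP; left; apply/eqP.
    by rewrite /re /rho /X; field; rewrite gt_eqF.
  have hrr : rho <= kappa ^+ 4 * gamma^-1 * wbar * X.
    rewrite le_eqVlt; apply/orP; left; apply/eqP.
    by rewrite /rho /X; field; rewrite gt_eqF.
  have [fx fu] := final_scalar a0 b0 hk d1 (ltW hw) X0 hre hrr re0 rr0.
  rewrite eps3E c3E; split.
    apply: (le_trans (ninf_mul _ _)); apply: le_trans fx.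
    by apply: ler_wpM2l => //; exact: he.
  rewrite u_diff; apply: (le_trans (ninf_mul _ _)); apply: le_trans fu.
  apply: ler_wpM2l => //.
  apply: (le_trans (n2D _ _)); rewrite n2N.
  have h1 := stab_K hKK (xK A B K w t - xM A B H KK (MofK A B KK K) w t).
  have h2 := stab_K hKK (xK A B K w t - Ssum (A - B *m K) w H t).
  have h3 := stab_K hK (xK A B K w t - Ssum (A - B *m K) w H t).
  have h4 := n2B (KK *m (xK A B K w t - Ssum (A - B *m K) w H t))
                 (K *m (xK A B K w t - Ssum (A - B *m K) w H t)).
  have h5 : kappa * norm2 (xK A B K w t - xM A B H KK (MofK A B KK K) w t) <= kappa * re.
    by apply: ler_wpM2l => //; exact: he.
  have h6 : kappa * norm2 (xK A B K w t - Ssum (A - B *m K) w H t) <= kappa * rho.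
    by apply: ler_wpM2l => //; exact: hr.
  lra.
split => //.
- move=> w hwa t _; have [h1 h2] := main w hwa t.
  by rewrite ge_max h1 h2.
- move=> w hwa t tT; have [h1 h2] := main w hwa t.
  have [sx su] := hsafe w hwa t tT.
  split => i.
  + have E : Dx *m xM A B H KK (MofK A B KK K) w t =
        Dx *m xK A B K w t - Dx *m (xK A B K w t - xM A B H KK (MofK A B KK K) w t).
      by rewrite mulmxBr subKr.
    rewrite E entry_sub.
    have := sx i; have := entry_le_ninf (Dx *m (xK A B K w t - xM A B H KK (MofK A B KK K) w t)) i.
    have := ler_norm (- (Dx *m (xK A B K w t - xM A B H KK (MofK A B KK K) w t)) i 0).
    rewrite normrN; lra.
  + have E : uM A B H KK (MofK A B KK K) w t =
        uK A B K w t - (uK A B K w t - uM A B H KK (MofK A B KK K) w t).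
      by rewrite subKr.
    rewrite E mulmxBr entry_sub.
    have := su i; have := entry_le_ninf (Du *m (uK A B K w t - uM A B H KK (MofK A B KK K) w t)) i.
    have := ler_norm (- (Du *m (uK A B K w t - uM A B H KK (MofK A B KK K) w t)) i 0).
    rewrite normrN; lra.
Qed.
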